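(* With $h$ as defined in the context, for every $x\in(-2,\infty)$, \[1<h(x)<\left(\frac{x+3}{x+2}\right)^2.\]
   Context: Let $u_n=(-1)^{s_2(n)}$, where $s_2(n)$ is the sum of the binary digits of the non-negative integer $n$ (Thue–Morse sequence with values $\pm1$). For real $x>-2$ define $h(x)=\prod_{n=1}^\infty\left(\frac{2n+x}{2n+1+x}\right)^{u_n}$ (limit of partial products; it converges). *)

(* Defs.v *)
From Stdlib Require Import Reals ZArith Arith.
From Coquelicot Require Import Coquelicot.
Open Scope R_scope.

(* s2 n : sum of the binary digits of n.  All bits of n at positions > n vanish
   (n < 2^(n+1)), so counting set bits among positions 0..n is exact. *)
Fixpoint bitcount_upto (n k : nat) : nat :=
  match k with
  | O => if Nat.testbit n 0 then 1%nat else 0%nat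
  | S j => ((if Nat.testbit n k then 1%nat else 0%nat) + bitcount_upto n j)%nat
  end.

Definition s2 (n : nat) : nat := bitcount_upto n n.

Definition u (n : nat) : Z := ((-1) ^ Z.of_nat (s2 n))%Z.

Definition hfactor (x : R) (n : nat) : R :=
  powerRZ ((2 * INR n + x) / (2 * INR n + 1 + x)) (u n).

Fixpoint hpartial (x : R) (N : nat) : R :=
  match N with
  | O => 1
  | S m => hpartial x m * hfactor x (S m)
  end.

Definition h (x : R) : R := real (Lim_seq (hpartial x)).

(* Main.v *)
Require Import Defs.
From Stdlib Require Import Reals ZArith Arith Lia Lra.
From Coquelicot Require Import Coquelicot.
Open Scope R_scope.

Lemma bc_even : forall k n, bitcount_upto (2*n) (S k) = bitcount_upto n k.
Proof.
  induction k as [|k IH]; intros n.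
  - change (bitcount_upto (2*n) 1) with ((if Nat.testbit (2*n) 1 then 1%nat else 0%nat) + (if Nat.testbit (2*n) 0 then 1%nat else 0%nat))%nat.
    change (bitcount_upto n 0) with (if Nat.testbit n 0 then 1%nat else 0%nat).
    rewrite Nat.testbit_even_succ by lia.
    rewrite Nat.testbit_even_0. lia.
  - change (bitcount_upto (2*n) (S (S k))) with
      ((if Nat.testbit (2*n) (S (S k)) then 1%nat else 0%nat) + bitcount_upto (2*n) (S k))%nat.
    rewrite IH, Nat.testbit_even_succ by lia. reflexivity.
Qed.

Lemma bc_odd : forall k n, bitcount_upto (2*n+1) (S k) = S (bitcount_upto n k).
Proof.
  induction k as [|k IH]; intros n.
  - change (bitcount_upto (2*n+1) 1) with ((if Nat.testbit (2*n+1) 1 then 1%nat else 0%nat) + (if Nat.testbit (2*n+1) 0 then 1%nat else 0%nat))%nat.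
    change (bitcount_upto n 0) with (if Nat.testbit n 0 then 1%nat else 0%nat).
    rewrite Nat.testbit_odd_succ by lia.
    rewrite Nat.testbit_odd_0. lia.
  - change (bitcount_upto (2*n+1) (S (S k))) with
      ((if Nat.testbit (2*n+1) (S (S k)) then 1%nat else 0%nat) + bitcount_upto (2*n+1) (S k))%nat.
    rewrite IH, Nat.testbit_odd_succ by lia. simpl. lia.
Qed.

Lemma tb_above : forall m j, (m < 2 ^ j)%nat -> Nat.testbit m j = false.
Proof.
  intros m j H. rewrite Nat.testbit_eqb. rewrite Nat.div_small by exact H. reflexivity.
Qed.

Lemma bc_stab : forall m k j, (m < 2 ^ S k)%nat -> bitcount_upto m (j + k) = bitcount_upto m k.
Proof.
  intros m k j H. induction j as [|j IH]; [reflexivity|].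
  change (bitcount_upto m (S j + k)) with
     ((if Nat.testbit m (S (j+k)) then 1%nat else 0%nat) + bitcount_upto m (j + k))%nat.
  rewrite IH, tb_above; [reflexivity|].
  apply Nat.lt_le_trans with (1 := H). apply Nat.pow_le_mono_r; lia.
Qed.

Lemma pow_gt : forall n, (n < 2 ^ n)%nat.
Proof. induction n; simpl; lia. Qed.

Lemma s2_even : forall n, s2 (2*n) = s2 n.
Proof.
  intros n. destruct n as [|n]; [reflexivity|]. unfold s2.
  assert (E: bitcount_upto (2*S n) (n + S (S n)) = bitcount_upto (2*S n) (S (S n))).
  { apply bc_stab. pose proof (pow_gt (S n)). simpl in *. lia. }
  replace (n + S (S n))%nat with (2 * S n)%nat in E by lia.
  rewrite E. apply bc_even.
Qed.

Lemma s2_odd : forall n, s2 (2*n+1) = S (s2 n).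
Proof.
  intros n. unfold s2.
  assert (E: bitcount_upto (2*n+1) (n + S n) = bitcount_upto (2*n+1) (S n)).
  { apply bc_stab. pose proof (pow_gt n). simpl in *. lia. }
  replace (n + S n)%nat with (2 * n + 1)%nat in E by lia.
  rewrite E. apply bc_odd.
Qed.

Lemma u_even : forall n, u (2*n) = u n.
Proof. intros; unfold u; rewrite s2_even; reflexivity. Qed.

Lemma u_odd : forall n, u (2*n+1) = (- u n)%Z.
Proof.
  intros; unfold u; rewrite s2_odd, Nat2Z.inj_succ, Z.pow_succ_r by lia. ring.
Qed.

Lemma u_pm : forall n, u n = 1%Z \/ u n = (-1)%Z.
Proof.
  intros n. induction n as [n IH] using lt_wf_ind.
  destruct n as [|n]; [left; reflexivity|].
  destruct (Nat.Even_or_Odd (S n)) as [[k Hk]|[k Hk]].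
  - rewrite Hk, u_even. apply IH. lia.
  - rewrite Hk, u_odd. destruct (IH k ltac:(lia)) as [E|E]; rewrite E; auto.
Qed.
Definition e (n : nat) : R := IZR (u n).
Definition a (x : R) (n : nat) : R := ln ((2 * INR n + x) / (2 * INR n + 1 + x)).
Fixpoint SS (x : R) (N : nat) : R :=
  match N with
  | O => 0
  | S m => SS x m + e (S m) * a x (S m)
  end.

Lemma SS_S x N : SS x (S N) = SS x N + e (S N) * a x (S N).
Proof. reflexivity. Qed.

Lemma e_pm n : e n = 1 \/ e n = -1.
Proof. unfold e. destruct (u_pm n) as [E|E]; rewrite E; [left|right]; reflexivity. Qed.

Lemma Rabs_e_mul n r : Rabs (e n * r) = Rabs r.
Proof. rewrite Rabs_mult. destruct (e_pm n) as [E|E]; rewrite E, ?Rabs_R1, ?Rabs_m1; ring. Qed.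

Lemma e4_0 m : e (4*m) = e m.
Proof. unfold e. replace (4*m)%nat with (2*(2*m))%nat by lia. rewrite !u_even. reflexivity. Qed.
Lemma e4_1 m : e (4*m+1) = - e m.
Proof. unfold e. replace (4*m+1)%nat with (2*(2*m)+1)%nat by lia. rewrite u_odd, u_even, opp_IZR. reflexivity. Qed.
Lemma e4_2 m : e (4*m+2) = - e m.
Proof. unfold e. replace (4*m+2)%nat with (2*(2*m+1))%nat by lia. rewrite u_even, u_odd, opp_IZR. reflexivity. Qed.
Lemma e4_3 m : e (4*m+3) = e m.
Proof. unfold e. replace (4*m+3)%nat with (2*(2*m+1)+1)%nat by lia. rewrite !u_odd, opp_IZR, opp_IZR. ring. Qed.

Lemma INR_pos1 n : (1 <= n)%nat -> 1 <= INR n.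
Proof. intros H. apply (le_INR 1 n) in H. simpl in H. exact H. Qed.

Lemma hfactor_exp x n : -2 < x -> (1 <= n)%nat -> hfactor x n = exp (e n * a x n).
Proof.
  intros hx hn. pose proof (INR_pos1 n hn).
  assert (Hr : 0 < (2 * INR n + x) / (2 * INR n + 1 + x)).
  { apply Rdiv_lt_0_compat; lra. }
  unfold hfactor, a, e. destruct (u_pm n) as [E|E]; rewrite E.
  - simpl powerRZ. rewrite Rmult_1_l, exp_ln by exact Hr. ring.
  - simpl powerRZ. replace (IZR (-1)) with (-1) by reflexivity.
    replace (-1 * ln ((2 * INR n + x) / (2 * INR n + 1 + x))) with
      (- ln ((2 * INR n + x) / (2 * INR n + 1 + x))) by ring.
    rewrite exp_Ropp, exp_ln by exact Hr. rewrite Rmult_1_r. reflexivity.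
Qed.

Lemma hpartial_exp x N : -2 < x -> hpartial x N = exp (SS x N).
Proof.
  intros hx. induction N as [|N IH].
  - simpl. rewrite exp_0. reflexivity.
  - simpl hpartial. rewrite SS_S, exp_plus, IH, hfactor_exp by (auto; lia). reflexivity.
Qed.

Definition d (x : R) (m : nat) : R :=
  a x (4*m) - a x (4*m+1) - a x (4*m+2) + a x (4*m+3).

Lemma block x m : SS x (4*(S m)+3) = SS x (4*m+3) + e (S m) * d x (S m).
Proof.
  replace (4 * S m + 3)%nat with (S (S (S (S (4*m+3))))) by lia.
  rewrite !SS_S.
  replace (S (4*m+3)) with (4 * S m)%nat by lia.
  replace (S (4 * S m)) with (4 * S m + 1)%nat by lia.
  replace (S (4 * S m + 1)) with (4 * S m + 2)%nat by lia.
  replace (S (4 * S m + 2)) with (4 * S m + 3)%nat by lia.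
  rewrite e4_0, e4_1, e4_2, e4_3. unfold d. ring.
Qed.

Lemma ln_lower z : 0 < z -> 1 - / z <= ln z.
Proof.
  intros hz. pose proof (exp_ineq1_le (- ln z)) as H.
  rewrite exp_Ropp, exp_ln in H by exact hz. lra.
Qed.

Lemma ln_upper z : 0 < z -> ln z <= z - 1.
Proof.
  intros hz. pose proof (exp_ineq1_le (ln z)) as H.
  rewrite exp_ln in H by exact hz. lra.
Qed.

Lemma a_bounds x n p : p = 2 * INR n + x -> 0 < p ->
  - / p <= a x n <= - / (p + 1).
Proof.
  intros Hp hp. unfold a. rewrite <- Hp.
  replace (2 * INR n + 1 + x) with (p + 1) by lra.
  assert (Hr : 0 < p / (p + 1)) by (apply Rdiv_lt_0_compat; lra).
  split.
  - eapply Rle_trans; [|apply ln_lower; exact Hr].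
    right. field. lra.
  - eapply Rle_trans; [apply ln_upper; exact Hr|].
    right. field. lra.
Qed.
Definition wt (x : R) (m : nat) : R := 2 / (8 * INR m + x) ^ 2.

Lemma a4 x m k : a x (4*m+k) = ln ((8 * INR m + x + 2 * INR k) / (8 * INR m + x + 2 * INR k + 1)).
Proof.
  unfold a. rewrite plus_INR, mult_INR. replace (INR 4) with 4 by (simpl; ring).
  f_equal; f_equal; ring.
Qed.

Lemma a4r x m k r : INR k = r -> a x (4*m+k) = ln ((8 * INR m + x + 2 * r) / (8 * INR m + x + 2 * r + 1)).
Proof. intros <-. apply a4. Qed.

Lemma a40 x m : a x (4*m) = ln ((8 * INR m + x) / (8 * INR m + x + 1)).
Proof.
  unfold a. rewrite mult_INR. replace (INR 4) with 4 by (simpl; ring).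
  f_equal; f_equal; ring.
Qed.

Lemma d_bound x m : -2 < x -> (1 <= m)%nat -> Rabs (d x m) <= wt x m - wt x (S m).
Proof.
  intros hx hm. pose proof (INR_pos1 m hm) as Hm.
  unfold d, wt. rewrite a40, (a4r x m 1 1), (a4r x m 2 2), (a4r x m 3 3) by (simpl; ring).
  rewrite (S_INR m).
  replace (8 * (INR m + 1) + x) with (8 * INR m + x + 8) by ring.
  set (y := 8 * INR m + x).
  assert (hy : 6 < y) by (unfold y; lra).
  set (Q := y * (y + 3) * (y + 5) * (y + 6) / ((y + 1) * (y + 2) * (y + 4) * (y + 7))).
  assert (HQ : Q > 0) by (unfold Q; apply Rdiv_lt_0_compat; repeat apply Rmult_lt_0_compat; lra).
  assert (E : ln (y / (y + 1)) - ln ((y + 2 * 1) / (y + 2 * 1 + 1)) -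
     ln ((y + 2 * 2) / (y + 2 * 2 + 1)) + ln ((y + 2 * 3) / (y + 2 * 3 + 1)) = ln Q).
  { rewrite !ln_div by (try apply Rdiv_lt_0_compat; repeat apply Rmult_lt_0_compat; lra).
    unfold Q. rewrite ln_div by (repeat apply Rmult_lt_0_compat; lra).
    rewrite !ln_mult by (repeat apply Rmult_lt_0_compat; lra).
    replace (y + 2 * 0) with y by ring.
    replace (y + 2 * 0 + 1) with (y + 1) by ring.
    replace (y + 2 * 1) with (y + 2) by ring.
    replace (y + 2 * 1 + 1) with (y + 3) by ring.
    replace (y + 2 * 2) with (y + 4) by ring.
    replace (y + 2 * 2 + 1) with (y + 5) by ring.
    replace (y + 2 * 3) with (y + 6) by ring.
    replace (y + 2 * 3 + 1) with (y + 7) by ring.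
    replace (y + 2 + 1) with (y + 3) by ring.
    replace (y + 4 + 1) with (y + 5) by ring.
    replace (y + 6 + 1) with (y + 7) by ring.
    ring. }
  rewrite E.
  assert (Hnum : 0 < y * (y + 3) * (y + 5) * (y + 6)) by (repeat apply Rmult_lt_0_compat; lra).
  assert (Hden : 0 < (y + 1) * (y + 2) * (y + 4) * (y + 7)) by (repeat apply Rmult_lt_0_compat; lra).
  assert (H1 : ln Q <= 0).
  { eapply Rle_trans; [apply ln_upper; exact HQ|].
    replace (Q - 1) with (- ((16 * y + 56) / ((y + 1) * (y + 2) * (y + 4) * (y + 7)))).
    2:{ unfold Q. field. lra. }
    assert (0 < (16 * y + 56) / ((y + 1) * (y + 2) * (y + 4) * (y + 7))) by (apply Rdiv_lt_0_compat; lra).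
    lra. }
  assert (H2 : - (2 / y ^ 2 - 2 / (y + 8) ^ 2) <= ln Q).
  { eapply Rle_trans; [|apply ln_lower; exact HQ].
    replace (1 - / Q) with (- ((16 * y + 56) / (y * (y + 3) * (y + 5) * (y + 6)))).
    2:{ unfold Q. field. repeat split; lra. }
    assert (0 <= (2 / y ^ 2 - 2 / (y + 8) ^ 2) - (16 * y + 56) / (y * (y + 3) * (y + 5) * (y + 6))).
    { replace ((2 / y ^ 2 - 2 / (y + 8) ^ 2) - (16 * y + 56) / (y * (y + 3) * (y + 5) * (y + 6)))
        with ((y * (11520 + 7360 * y + 1888 * y ^ 2 + 264 * y ^ 3 + 16 * y ^ 4)) /
              (y * (y + 3) * (y + 5) * (y + 6) * (y ^ 2 * (y + 8) ^ 2))).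
      2:{ field. repeat split; lra. }
      apply Rlt_le, Rdiv_lt_0_compat.
      - apply Rmult_lt_0_compat; [lra|]. 
        assert (0 < y ^ 2) by nra. assert (0 < y ^ 3) by (simpl; nra).
        assert (0 < y ^ 4) by (simpl; nra). lra.
      - apply Rmult_lt_0_compat; [lra|]. apply Rmult_lt_0_compat; apply pow_lt; lra. }
    lra. }
  assert (0 <= 2 / y ^ 2 - 2 / (y + 8) ^ 2) by lra.
  rewrite Rabs_left1 by exact H1. lra.
Qed.
Lemma SS3 x : SS x 3 = - a x 1 - a x 2 + a x 3.
Proof.
  rewrite !SS_S. simpl SS.
  assert (E1 : e 1 = -1) by (unfold e; replace (u 1) with (-1)%Z by reflexivity; reflexivity).
  assert (E2 : e 2 = -1) by (unfold e; replace (u 2) with (-1)%Z by reflexivity; reflexivity).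
  assert (E3 : e 3 = 1) by (unfold e; replace (u 3) with (1)%Z by reflexivity; reflexivity).
  rewrite E1, E2, E3. ring.
Qed.

Definition v (x : R) (k : nat) : R := e (S k) * d x (S k).

Lemma SS_blocks x M : SS x (4*(S M)+3) = SS x 3 + sum_f_R0 (v x) M.
Proof.
  induction M as [|M IH].
  - rewrite block. reflexivity.
  - rewrite block, IH. simpl sum_f_R0. unfold v. ring.
Qed.

Lemma wt_pos x m : -2 < x -> (1 <= m)%nat -> 0 < wt x m.
Proof.
  intros hx hm. pose proof (INR_pos1 m hm). unfold wt.
  apply Rdiv_lt_0_compat; [lra|]. apply pow_lt. lra.
Qed.

Lemma abs_partial x M : -2 < x ->
  sum_f_R0 (fun k => Rabs (v x k)) M <= wt x 1 - wt x (S (S M)).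
Proof.
  intros hx. induction M as [|M IH].
  - simpl sum_f_R0. unfold v. rewrite Rabs_e_mul. apply d_bound; auto.
  - simpl sum_f_R0. unfold v at 2. rewrite Rabs_e_mul.
    pose proof (d_bound x (S (S M)) hx ltac:(lia)). lra.
Qed.

Lemma abs_partial' x M : -2 < x -> sum_f_R0 (fun k => Rabs (v x k)) M <= wt x 1.
Proof.
  intros hx. pose proof (abs_partial x M hx). pose proof (wt_pos x (S (S M)) hx ltac:(lia)). lra.
Qed.

Lemma v_ex x : -2 < x -> ex_series (v x).
Proof.
  intros hx. apply ex_series_Rabs.
  destruct (ex_finite_lim_seq_incr (sum_n (fun k => Rabs (v x k))) (wt x 1)) as [l Hl].
  - intros n. rewrite !sum_n_Reals. simpl sum_f_R0. pose proof (Rabs_pos (v x (S n))). lra.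
  - intros n. rewrite sum_n_Reals. apply abs_partial'; auto.
  - exists l. exact Hl.
Qed.

Lemma Lv_bound x : -2 < x -> Rabs (Series (v x)) <= wt x 1.
Proof.
  intros hx. pose proof (Series_correct _ (v_ex x hx)) as Hs.
  assert (Hl : is_lim_seq (sum_n (v x)) (Series (v x))) by exact Hs.
  assert (B : forall n, Rabs (sum_n (v x) n) <= wt x 1).
  { intros n. rewrite sum_n_Reals. eapply Rle_trans; [apply sum_f_R0_triangle|].
    apply abs_partial'; auto. }
  apply Rabs_le. split.
  - assert (Hle := is_lim_seq_le (fun _ => - wt x 1) (sum_n (v x)) (- wt x 1) (Series (v x))).
    simpl in Hle. apply Hle; [|apply is_lim_seq_const|exact Hl].
    intros n. specialize (B n). apply Rabs_le_between in B. lra.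
  - assert (Hle := is_lim_seq_le (sum_n (v x)) (fun _ => wt x 1) (Series (v x)) (wt x 1)).
    simpl in Hle. apply Hle; [|exact Hl|apply is_lim_seq_const].
    intros n. specialize (B n). apply Rabs_le_between in B. lra.
Qed.
Lemma tail x K j B : (forall n, (K < n)%nat -> Rabs (a x n) <= B) ->
  Rabs (SS x (K + j) - SS x K) <= INR j * B.
Proof.
  intros HB. induction j as [|j IH].
  - rewrite Nat.add_0_r. simpl. rewrite Rminus_diag, Rabs_R0. lra.
  - rewrite Nat.add_succ_r, SS_S, S_INR.
    replace (SS x (K + j) + e (S (K + j)) * a x (S (K + j)) - SS x K)
      with ((SS x (K + j) - SS x K) + e (S (K + j)) * a x (S (K + j))) by ring.
    eapply Rle_trans; [apply Rabs_triang|]. rewrite Rabs_e_mul.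
    specialize (HB (S (K + j)) ltac:(lia)). lra.
Qed.

Lemma conv_full x (L : R) : -2 < x ->
  is_lim_seq (fun M => SS x (4*(S M)+3)) L -> is_lim_seq (SS x) L.
Proof.
  intros hx H. apply is_lim_seq_spec in H. apply is_lim_seq_spec. cbn [is_lim_seq'] in *.
  intros eps. destruct (H (pos_div_2 eps)) as [N0 HN0]. unfold eventually.
  pose proof (cond_pos eps) as Heps.
  destruct (INR_archimed eps (6 + 2 * eps) Heps) as [N1 HN1].
  exists (4 * S (max N0 N1) + 3)%nat. intros N HN.
  pose proof (Nat.div_mod_eq (N - 3) 4) as Hdm.
  pose proof (Nat.mod_upper_bound (N - 3) 4 ltac:(lia)) as Hr.
  set (q := ((N - 3) / 4)%nat) in *. set (r := ((N - 3) mod 4)%nat) in *.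
  destruct q as [|M] eqn:Hq; [lia|].
  assert (HM : (max N0 N1 <= M)%nat) by lia.
  replace N with ((4 * S M + 3) + r)%nat by lia.
  assert (Ht : Rabs (SS x (4 * S M + 3 + r) - SS x (4 * S M + 3)) <= INR r * (eps / 6)).
  { apply tail. intros n Hn.
    assert (Hn1 : INR N1 <= INR n) by (apply le_INR; lia).
    assert (HN1p : 1 <= INR n) by (apply INR_pos1; lia).
    assert (hp : 0 < 2 * INR n + x) by lra.
    destruct (a_bounds x n (2 * INR n + x) eq_refl hp) as [Ha1 Ha2].
    assert (Hpp : 0 < / (2 * INR n + x + 1)) by (apply Rinv_0_lt_compat; lra).
    rewrite Rabs_left by lra.
    assert (6 <= eps * (2 * INR n + x)) by nra.
    assert (/ (2 * INR n + x) <= eps / 6).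
    { replace (eps / 6) with ((eps * (2 * INR n + x)) / 6 * / (2 * INR n + x)) by (field; lra).
      rewrite <- (Rmult_1_l (/ (2 * INR n + x))) at 1.
      apply Rmult_le_compat_r; [apply Rlt_le, Rinv_0_lt_compat; lra| lra]. }
    lra. }
  specialize (HN0 M ltac:(lia)). change (pos (pos_div_2 eps)) with (eps / 2) in HN0.
  assert (Hr3 : INR r <= 3) by (replace 3 with (INR 3) by (simpl; ring); apply le_INR; lia).
  assert (INR r * (eps / 6) <= 3 * (eps / 6)) by (apply Rmult_le_compat_r; lra).
  replace (SS x (4 * S M + 3 + r) - L) with
    ((SS x (4 * S M + 3 + r) - SS x (4 * S M + 3)) + (SS x (4 * S M + 3) - L)) by ring.
  eapply Rle_lt_trans; [apply Rabs_triang|]. lra.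
Qed.
Lemma F1 x : -2 < x -> 2 / (8 + x) ^ 2 < / (3 + x) - / (6 + x).
Proof.
  intros hx.
  assert (0 < / (3 + x) - / (6 + x) - 2 / (8 + x) ^ 2).
  { replace (/ (3 + x) - / (6 + x) - 2 / (8 + x) ^ 2) with
      ((x * x + 30 * x + 156) / ((3 + x) * (6 + x) * (8 + x) ^ 2)) by (field; lra).
    apply Rdiv_lt_0_compat; [nra|].
    apply Rmult_lt_0_compat; [apply Rmult_lt_0_compat; lra| apply pow_lt; lra]. }
  lra.
Qed.

Lemma F2 x : -2 < x -> 2 / (8 + x) ^ 2 < / (3 + x) - / (4 + x) + / (7 + x).
Proof.
  intros hx.
  assert (0 < / (3 + x) - / (4 + x) + / (7 + x) - 2 / (8 + x) ^ 2).
  { replace (/ (3 + x) - / (4 + x) + / (7 + x) - 2 / (8 + x) ^ 2) with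
      (/ ((3 + x) * (4 + x)) + (x * x + 14 * x + 50) / ((7 + x) * (8 + x) ^ 2)) by (field; lra).
    assert (0 < / ((3 + x) * (4 + x))) by (apply Rinv_0_lt_compat, Rmult_lt_0_compat; lra).
    assert (0 < (x * x + 14 * x + 50) / ((7 + x) * (8 + x) ^ 2)).
    { apply Rdiv_lt_0_compat; [nra|].
      apply Rmult_lt_0_compat; [lra| apply pow_lt; lra]. }
    lra. }
  lra.
Qed.

Theorem theorem3 (x : R) (hx : -2 < x) :
  1 < h x /\ h x < ((x + 3) / (x + 2)) ^ 2.
Proof.
  set (Lv := Series (v x)).
  set (L := SS x 3 + Lv).
  assert (HT : is_lim_seq (fun M => SS x (4*(S M)+3)) L).
  { apply is_lim_seq_ext with (u := fun M => SS x 3 + sum_n (v x) M).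
    { intros M. rewrite SS_blocks, sum_n_Reals. reflexivity. }
    apply (is_lim_seq_plus' (fun _ => SS x 3) (sum_n (v x)) (SS x 3) Lv).
    - apply is_lim_seq_const.
    - exact (Series_correct _ (v_ex x hx)). }
  pose proof (conv_full x L hx HT) as HS.
  pose proof (is_lim_seq_continuous exp (SS x) L (derivable_continuous_pt _ _ (derivable_pt_exp L)) HS) as HE.
  assert (Hh : h x = exp L).
  { unfold h. rewrite (is_lim_seq_unique (hpartial x) (exp L)).
    - reflexivity.
    - apply is_lim_seq_ext with (u := fun n => exp (SS x n)); [|exact HE].
      intros n. symmetry. apply hpartial_exp. exact hx. }
  rewrite Hh.
  pose proof (Lv_bound x hx) as HB. fold Lv in HB.
  unfold wt in HB. replace (8 * INR 1 + x) with (8 + x) in HB by (simpl; ring).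
  apply Rabs_le_between in HB.
  destruct (a_bounds x 1 (2 + x) ltac:(simpl; ring) ltac:(lra)) as [A1l A1u].
  destruct (a_bounds x 2 (4 + x) ltac:(simpl; ring) ltac:(lra)) as [A2l A2u].
  destruct (a_bounds x 3 (6 + x) ltac:(simpl; ring) ltac:(lra)) as [A3l A3u].
  replace (2 + x + 1) with (3 + x) in A1u by ring.
  replace (4 + x + 1) with (5 + x) in A2u by ring.
  replace (6 + x + 1) with (7 + x) in A3u by ring.
  pose proof (F1 x hx). pose proof (F2 x hx).
  assert (0 < / (5 + x)) by (apply Rinv_0_lt_compat; lra).
  unfold L. rewrite SS3. split.
  - rewrite <- exp_0. apply exp_increasing. lra.
  - assert (Ee : ((x + 3) / (x + 2)) ^ 2 = exp (- a x 1 + - a x 1)).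
    { rewrite exp_plus, exp_Ropp. unfold a.
      rewrite exp_ln.
      - replace (INR 1) with 1 by reflexivity. field. lra.
      - replace (INR 1) with 1 by reflexivity. apply Rdiv_lt_0_compat; lra. }
    rewrite Ee. apply exp_increasing. lra.
Qed.
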